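(* Let $X$ be a real Hilbert space, let $A,B\colon X\rightrightarrows X$, let $\mu>\omega\ge0$, and let $\gamma\in\left]0,\frac{\mu-\omega}{2\mu\omega}\right[$ (with $\gamma\in\left]0,+\infty\right[$ when $\omega=0$). Suppose that either (a) $A$ is maximally $(-\omega)$-monotone and $B$ is maximally $\mu$-monotone, or (b) $A$ is maximally $\mu$-monotone and $B$ is maximally $(-\omega)$-monotone. Set $$T=\tfrac12\big(\mathrm{Id}+R_{\gamma B}R_{\gamma A}\big),\qquad\alpha=\frac{\mu-\omega}{2(\mu-\omega-\gamma\mu\omega)}.$$ Then $T$ is single-valued with full domain, $\alpha\in\left]0,1\right[$, and $T$ is $\alpha$-averaged.
   Context: For $\rho\in\mathbb{R}$, $A\colon X\rightrightarrows X$ is $\rho$-monotone if $\langle x-y,u-v\rangle\ge\rho\|x-y\|^2$ for all $(x,u),(y,v)\in\operatorname{gra}A$, and maximally $\rho$-monotone if no proper extension of its graph is $\rho$-monotone. $J_A=(\mathrm{Id}+A)^{-1}$, $R_A=2J_A-\mathrm{Id}$. For $\alpha\in\left]0,1\right[$, $T$ is $\alpha$-averaged if $T=(1-\alpha)\mathrm{Id}+\alpha N$ for some nonexpansive ($1$-Lipschitz) $N\colon X\to X$. *)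

(* Defs.v *)
From Stdlib Require Import Reals Lra.
Open Scope R_scope.

Record HilbertSpace : Type := {
  hcar :> Type;
  hadd : hcar -> hcar -> hcar;
  hzero : hcar;
  hopp : hcar -> hcar;
  hscal : R -> hcar -> hcar;
  hinner : hcar -> hcar -> R;
  hadd_assoc : forall x y z, hadd x (hadd y z) = hadd (hadd x y) z;
  hadd_comm : forall x y, hadd x y = hadd y x;
  hadd_zero : forall x, hadd x hzero = x;
  hadd_opp : forall x, hadd x (hopp x) = hzero;
  hscal_assoc : forall a b x, hscal a (hscal b x) = hscal (a * b) x;
  hscal_one : forall x, hscal 1 x = x;
  hscal_distr_v : forall a x y, hscal a (hadd x y) = hadd (hscal a x) (hscal a y);
  hscal_distr_s : forall a b x, hscal (a + b) x = hadd (hscal a x) (hscal b x);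
  hinner_sym : forall x y, hinner x y = hinner y x;
  hinner_add_l : forall x y z, hinner (hadd x y) z = hinner x z + hinner y z;
  hinner_scal_l : forall a x y, hinner (hscal a x) y = a * hinner x y;
  hinner_pos : forall x, 0 <= hinner x x;
  hinner_def : forall x, hinner x x = 0 -> x = hzero;
  hcomplete : forall u : nat -> hcar,
    (forall eps, 0 < eps -> exists N, forall n m, (N <= n)%nat -> (N <= m)%nat ->
        sqrt (hinner (hadd (u n) (hopp (u m))) (hadd (u n) (hopp (u m)))) < eps) ->
    exists l, forall eps, 0 < eps -> exists N, forall n, (N <= n)%nat ->
        sqrt (hinner (hadd (u n) (hopp l)) (hadd (u n) (hopp l))) < eps
}.

Arguments hadd {h}. Arguments hzero {h}. Arguments hopp {h}.
Arguments hscal {h}. Arguments hinner {h}.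

Definition hsub {X : HilbertSpace} (x y : X) : X := hadd x (hopp y).
Definition hnorm {X : HilbertSpace} (x : X) : R := sqrt (hinner x x).

(* set-valued operator X ⇉ X, represented by its graph *)
Definition setop (X : HilbertSpace) := X -> X -> Prop.

Definition rho_monotone {X : HilbertSpace} (rho : R) (A : setop X) : Prop :=
  forall x u y v, A x u -> A y v ->
    hinner (hsub x y) (hsub u v) >= rho * (hnorm (hsub x y))^2.

Definition max_rho_monotone {X : HilbertSpace} (rho : R) (A : setop X) : Prop :=
  rho_monotone rho A /\
  forall B : setop X, rho_monotone rho B -> (forall x u, A x u -> B x u) ->
    forall x u, B x u -> A x u.

Definition op_scale {X : HilbertSpace} (g : R) (A : setop X) : setop X :=
  fun x w => exists u, A x u /\ w = hscal g u.

(* resolvent J_A = (Id + A)^{-1}: y ∈ J_A x iff x ∈ y + A y *)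
Definition resolvent {X : HilbertSpace} (A : setop X) : setop X :=
  fun x y => exists u, A y u /\ x = hadd y u.

Definition reflected {X : HilbertSpace} (A : setop X) : setop X :=
  fun x z => exists y, resolvent A x y /\ z = hsub (hscal 2 y) x.

Definition op_comp {X : HilbertSpace} (B A : setop X) : setop X :=
  fun x z => exists y, A x y /\ B y z.

Definition DR_op {X : HilbertSpace} (g : R) (A B : setop X) : setop X :=
  fun x w => exists z, op_comp (reflected (op_scale g B)) (reflected (op_scale g A)) x z
                    /\ w = hscal (1/2) (hadd x z).

Definition nonexpansive {X : HilbertSpace} (N : X -> X) : Prop :=
  forall x y, hnorm (hsub (N x) (N y)) <= hnorm (hsub x y).

Definition averaged {X : HilbertSpace} (alpha : R) (T : setop X) : Prop :=
  0 < alpha < 1 /\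
  exists N : X -> X, nonexpansive N /\
    forall x w, T x w <-> w = hadd (hscal (1 - alpha) x) (hscal alpha (N x)).

(* Main.v *)
Require Import Defs.
From Stdlib Require Import Reals Lra Lia Classical ClassicalEpsilon.
Open Scope R_scope.


Lemma hadd_cancel_self {X : HilbertSpace} (x : X) : hadd x x = x -> x = hzero.
Proof.
  intro H. rewrite <- (hadd_opp _ x). rewrite <- H at 2.
  rewrite <- hadd_assoc, hadd_opp, hadd_zero. reflexivity.
Qed.

Lemma hscal_zero {X : HilbertSpace} (x : X) : hscal 0 x = hzero.
Proof. apply hadd_cancel_self. rewrite <- hscal_distr_s. f_equal; ring. Qed.

Lemma hinner_zero_l {X : HilbertSpace} (z : X) : hinner hzero z = 0.
Proof. rewrite <- (hscal_zero hzero), hinner_scal_l. ring. Qed.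

Lemma hinner_opp_l {X : HilbertSpace} (x : X) (z : X) : hinner (hopp x) z = - hinner x z.
Proof.
  assert (H := hinner_add_l _ x (hopp x) z). rewrite hadd_opp, hinner_zero_l in H. lra.
Qed.

Lemma hinner_add_r {X : HilbertSpace} (x : X) (y : X) (z : X) : hinner z (hadd x y) = hinner z x + hinner z y.
Proof. rewrite !(hinner_sym _ z). apply hinner_add_l. Qed.
Lemma hinner_scal_r {X : HilbertSpace} (a : R) (x : X) (z : X) : hinner z (hscal a x) = a * hinner z x.
Proof. rewrite !(hinner_sym _ z). apply hinner_scal_l. Qed.
Lemma hinner_opp_r {X : HilbertSpace} (x : X) (z : X) : hinner z (hopp x) = - hinner z x.
Proof. rewrite !(hinner_sym _ z). apply hinner_opp_l. Qed.
Lemma hinner_zero_r {X : HilbertSpace} (z : X) : hinner z hzero = 0.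
Proof. rewrite hinner_sym. apply hinner_zero_l. Qed.

Lemma vec_ext {X : HilbertSpace} (v : X) (w : X) : (forall z, hinner v z = hinner w z) -> v = w.
Proof.
  intro H. assert (E : hinner (hadd v (hopp w)) (hadd v (hopp w)) = 0).
  { rewrite hinner_add_l, hinner_opp_l, H. ring. }
  apply hinner_def in E.
  rewrite <- (hadd_zero _ w), <- E, (hadd_comm _ v), hadd_assoc, hadd_opp, hadd_comm, hadd_zero.
  reflexivity.
Qed.

Lemma hnorm_sq {X : HilbertSpace} (z : X) : hnorm z ^ 2 = hinner z z.
Proof. unfold hnorm. rewrite pow2_sqrt; auto using hinner_pos. Qed.


#[export] Hint Rewrite @hinner_add_l @hinner_add_r @hinner_scal_l @hinner_scal_r
  @hinner_opp_l @hinner_opp_r @hinner_zero_l @hinner_zero_r : hexp.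

Ltac hexpand := unfold hsub in *; autorewrite with hexp in *.
Ltac vext := apply vec_ext; let z := fresh "z" in intro z; unfold hsub; autorewrite with hexp.


Definition Hf {X : HilbertSpace} (N : setop X) (x u : X) (c : R) : Prop :=
  forall y v, N y v ->
  hinner x v + hinner y u - hinner y v + /2 * hinner x x + /2 * hinner u u <= c.

Lemma Hf_mono {X : HilbertSpace} (N : setop X) x u c c' : Hf N x u c -> c <= c' -> Hf N x u c'.
Proof. intros H Hc y v Hy. specialize (H y v Hy). lra. Qed.

Lemma Hf_L0 {X : HilbertSpace} (N : setop X)
 (maxi : forall a b, (forall y v, N y v -> hinner (hsub a y) (hsub b v) >= 0) -> N a b)
 (x u : X) c : Hf N x u c -> c >= /2 * hinner (hadd x u) (hadd x u).
Proof.
  intro H. apply Rnot_lt_ge; intro Hlt.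
  assert (Nxu : N x u).
  { apply maxi. intros y v Hyv. specialize (H y v Hyv). hexpand.
    rewrite (hinner_sym _ u x) in *. lra. }
  specialize (H x u Nxu). hexpand. rewrite (hinner_sym _ u x) in *. lra.
Qed.

Lemma Hf_mid {X : HilbertSpace} (N : setop X) (x1 u1 x2 u2 : X) c1 c2 :
  Hf N x1 u1 c1 -> Hf N x2 u2 c2 ->
  Hf N (hscal (/2) (hadd x1 x2)) (hscal (/2) (hadd u1 u2))
     ((c1 + c2)/2 - /8 * (hinner (hsub x1 x2) (hsub x1 x2) + hinner (hsub u1 u2) (hsub u1 u2))).
Proof.
  intros H1 H2 y v Hyv. specialize (H1 y v Hyv). specialize (H2 y v Hyv).
  hexpand. lra.
Qed.

Lemma amgm {X : HilbertSpace} (d z : X) t : 0 < t ->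
  2 * hinner d z <= t * hinner d d + / t * hinner z z.
Proof.
  intro Ht. assert (H := hinner_pos _ (hsub (hscal t d) z)). hexpand.
  rewrite (hinner_sym _ z d) in H.
  apply Rmult_le_reg_l with t; auto.
  replace (t * (t * hinner d d + / t * hinner z z)) with (t*t*hinner d d + hinner z z) by (field; lra).
  lra.
Qed.

Lemma f_cont {X : HilbertSpace} (x u y v : X) (delta : R) : 0 < delta ->
  exists eta, 0 < eta /\ forall a b : X,
    hinner (hsub a x) (hsub a x) < eta -> hinner (hsub b u) (hsub b u) < eta ->
    hinner x v + hinner y u - hinner y v + /2 * hinner x x + /2 * hinner u u <=
    hinner a v + hinner y b - hinner y v + /2 * hinner a a + /2 * hinner b b + delta.
Proof.
  intro Hd.
  set (G := hinner (hadd v x) (hadd v x) + hinner (hadd y u) (hadd y u)).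
  assert (HG : 0 <= G) by (unfold G; generalize (hinner_pos _ (hadd v x)) (hinner_pos _ (hadd y u)); lra).
  set (t := (G + 1) / delta).
  assert (Ht : 0 < t) by (unfold t; apply Rdiv_lt_0_compat; lra).
  exists (delta / (2 * t)). split. { apply Rdiv_lt_0_compat; lra. }
  intros a b Ha Hb.
  assert (A1 := amgm (hsub x a) (hadd v x) t Ht).
  assert (A2 := amgm (hsub u b) (hadd y u) t Ht).
  assert (T1 : t * hinner (hsub a x) (hsub a x) <= t * (delta / (2*t))) by (apply Rmult_le_compat_l; lra).
  assert (T2 : t * hinner (hsub b u) (hsub b u) <= t * (delta / (2*t))) by (apply Rmult_le_compat_l; lra).
  assert (T3 : t * (delta / (2*t)) = delta / 2) by (field; lra).
  assert (T4 : / t * G <= delta).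
  { unfold t. replace (/ ((G + 1) / delta) * G) with (delta * (G / (G+1))) by (field; lra).
    assert (G / (G+1) <= 1). { apply Rmult_le_reg_r with (G+1); [lra|]. field_simplify; lra. }
    nra. }
  assert (P1 := hinner_pos _ (hsub a x)). assert (P2 := hinner_pos _ (hsub b u)).
  unfold G in T4. hexpand.
  rewrite ?(hinner_sym _ a x), ?(hinner_sym _ b u), ?(hinner_sym _ x v), ?(hinner_sym _ a v),
    ?(hinner_sym _ u y), ?(hinner_sym _ b y) in *.
  lra.
Qed.

Lemma small_t (a b c : R) : (forall t, 0 < t < 1 -> a <= b + t * c) -> a <= b.
Proof.
  intro H. apply Rnot_lt_le. intro Hlt.
  set (e := a - b). set (k := Rabs c + 1).
  assert (He : 0 < e) by (unfold e; lra).
  assert (Hk : 0 < k) by (unfold k; generalize (Rabs_pos c); lra).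
  set (t := e / (e + 2 * k)).
  assert (Ht : t * (e + 2*k) = e) by (unfold t; field; lra).
  assert (Ht0 : 0 < t) by (unfold t; apply Rdiv_lt_0_compat; lra).
  assert (Ht1 : t < 1). { apply Rmult_lt_reg_r with (e + 2*k); [lra|]. lra. }
  specialize (H t (conj Ht0 Ht1)).
  assert (t * c <= t * k). { apply Rmult_le_compat_l; [lra|]. unfold k. generalize (Rle_abs c). lra. }
  assert (0 < t*(e+k)) by (apply Rmult_lt_0_compat; lra).
  assert (e = a - b) by reflexivity. lra.
Qed.

Lemma sqrt_lt_sq (a b : R) : 0 <= a -> 0 < b -> a < b * b -> sqrt a < b.
Proof.
  intros Ha Hb H. rewrite <- (sqrt_square b) by lra. apply sqrt_lt_1_alt. lra.
Qed.

Lemma sq_lt_sqrt (a b : R) : 0 <= a -> sqrt a < b -> a < b * b.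
Proof.
  intros Ha H. assert (S := sqrt_sqrt a Ha). assert (S0 := sqrt_pos a). nra.
Qed.

Lemma inv_small (eps : R) : 0 < eps -> exists N : nat, forall n, (N <= n)%nat -> / (INR n + 1) < eps.
Proof.
  intro He. destruct (archimed_cor1 eps He) as [N [HN HN0]]. exists N. intros n Hn.
  apply Rle_lt_trans with (/ INR N); auto.
  apply Rinv_le_contravar. apply lt_0_INR; lia.
  apply le_INR in Hn. lra.
Qed.

Lemma minty {X : HilbertSpace} (N : setop X)
 (mono : forall x u y v, N x u -> N y v -> hinner (hsub x y) (hsub u v) >= 0)
 (maxi : forall a b, (forall y v, N y v -> hinner (hsub a y) (hsub b v) >= 0) -> N a b) :
 exists y, N y (hopp y).
Proof.
  assert (NE : exists y0 v0, N y0 v0).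
  { destruct (classic (exists y0 v0, N y0 v0)) as [h|h]; auto.
    exists hzero, hzero. apply maxi. intros y v Hyv. exfalso. apply h; eauto. }
  destruct NE as [y0 [v0 H0]].
  assert (Hf0 : Hf N y0 v0 (hinner y0 v0 + /2 * hinner y0 y0 + /2 * hinner v0 v0)).
  { intros y v Hyv. assert (Mo := mono _ _ _ _ H0 Hyv). hexpand. lra. }
  set (E := fun c => exists x u, Hf N x u (- c)).
  assert (Eb : bound E).
  { exists 0. intros c [x [u Hc]]. apply (Hf_L0 N maxi) in Hc.
    generalize (hinner_pos _ (hadd x u)). lra. }
  assert (Ene : exists c, E c).
  { exists (- (hinner y0 v0 + /2 * hinner y0 y0 + /2 * hinner v0 v0)).
    exists y0, v0. rewrite Ropp_involutive. exact Hf0. }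
  destruct (completeness E Eb Ene) as [M [HM1 HM2]].
  set (m := - M).
  assert (mlow : forall x u c, Hf N x u c -> m <= c).
  { intros x u c Hc. assert (HE : E (-c)) by (exists x, u; rewrite Ropp_involutive; auto).
    specialize (HM1 _ HE). unfold m; lra. }
  assert (mapp : forall eps, 0 < eps -> exists x u, Hf N x u (m + eps)).
  { intros eps He. apply NNPP; intro Hn.
    assert (HU : is_upper_bound E (M - eps)).
    { intros c [x [u Hc]]. apply Rnot_lt_le; intro Hlt. apply Hn. exists x, u.
      apply Hf_mono with (-c); auto. unfold m; lra. }
    specialize (HM2 _ HU). lra. }
  assert (ex : forall n : nat, exists p : X * X, Hf N (fst p) (snd p) (m + / (INR n + 1))).
  { intro n. destruct (mapp (/ (INR n + 1))) as [x [u H]].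
    { apply Rinv_0_lt_compat. generalize (pos_INR n); lra. }
    exists (x,u); auto. }
  set (s := fun n => proj1_sig (constructive_indefinite_description _ (ex n))).
  assert (Hs : forall n, Hf N (fst (s n)) (snd (s n)) (m + / (INR n + 1))).
  { intro n. unfold s. destruct (constructive_indefinite_description _ (ex n)); auto. }
  set (xs := fun n => fst (s n)). set (us := fun n => snd (s n)).
  assert (Cau : forall n k, hinner (hsub (xs n) (xs k)) (hsub (xs n) (xs k))
     + hinner (hsub (us n) (us k)) (hsub (us n) (us k)) <= 4 * (/ (INR n + 1) + / (INR k + 1))).
  { intros n k. assert (Hm := Hf_mid _ _ _ _ _ _ _ (Hs n) (Hs k)). apply mlow in Hm.
    unfold xs, us. lra. }
  assert (CauX : forall eps, 0 < eps -> exists N0, forall n k, (N0 <= n)%nat -> (N0 <= k)%nat ->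
     hinner (hsub (xs n) (xs k)) (hsub (xs n) (xs k)) < eps /\
     hinner (hsub (us n) (us k)) (hsub (us n) (us k)) < eps).
  { intros eps He. destruct (inv_small (eps/8)) as [N0 HN0]. lra. exists N0. intros n k Hn Hk.
    assert (a1 := HN0 n Hn). assert (a2 := HN0 k Hk). assert (c := Cau n k).
    assert (p1 := hinner_pos _ (hsub (xs n) (xs k))). assert (p2 := hinner_pos _ (hsub (us n) (us k))).
    split; lra. }
  destruct (hcomplete X xs) as [xst Hx].
  { intros eps He. destruct (CauX (eps*eps)) as [N0 HN0]. nra. exists N0. intros n k Hn Hk.
    apply sqrt_lt_sq; auto using hinner_pos. apply HN0; auto. }
  destruct (hcomplete X us) as [ust Hu].
  { intros eps He. destruct (CauX (eps*eps)) as [N0 HN0]. nra. exists N0. intros n k Hn Hk.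
    apply sqrt_lt_sq; auto using hinner_pos. apply HN0; auto. }
  assert (LX : forall eta, 0 < eta -> exists N0, forall n, (N0 <= n)%nat ->
      hinner (hsub (xs n) xst) (hsub (xs n) xst) < eta).
  { intros eta He. destruct (Hx (sqrt eta)) as [N0 HN0]. apply sqrt_lt_R0; auto.
    exists N0. intros n Hn. rewrite <- (sqrt_sqrt eta) by lra. apply sq_lt_sqrt; [apply hinner_pos | apply HN0; auto]. }
  assert (LU : forall eta, 0 < eta -> exists N0, forall n, (N0 <= n)%nat ->
      hinner (hsub (us n) ust) (hsub (us n) ust) < eta).
  { intros eta He. destruct (Hu (sqrt eta)) as [N0 HN0]. apply sqrt_lt_R0; auto.
    exists N0. intros n Hn. rewrite <- (sqrt_sqrt eta) by lra. apply sq_lt_sqrt; [apply hinner_pos | apply HN0; auto]. }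
  assert (Hst : Hf N xst ust m).
  { intros y v Hyv.
    assert (D : forall delta, 0 < delta -> hinner xst v + hinner y ust - hinner y v + /2 * hinner xst xst
                 + /2 * hinner ust ust <= m + delta).
    { intros delta Hd. destruct (f_cont xst ust y v (delta/2)) as [eta [Heta Hc]]. lra.
      destruct (LX eta Heta) as [N1 HN1]. destruct (LU eta Heta) as [N2 HN2].
      destruct (inv_small (delta/2)) as [N3 HN3]. lra.
      assert (B1 := HN1 (N1+N2+N3)%nat ltac:(lia)).
      assert (B2 := HN2 (N1+N2+N3)%nat ltac:(lia)).
      assert (B3 := HN3 (N1+N2+N3)%nat ltac:(lia)).
      assert (B4 := Hs (N1+N2+N3)%nat y v Hyv).
      assert (B5 := Hc _ _ B1 B2). unfold xs, us in B5. lra. }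
    apply Rnot_lt_le. intro Hlt. match type of Hlt with ?a < ?b => specialize (D ((b - a)/2)) end. lra. }
  assert (Opt : forall y v, N y v -> m <= hinner y v + /2 * hinner y y + /2 * hinner v v
       - /2 * (hinner (hsub y xst) (hsub y xst) + hinner (hsub v ust) (hsub v ust))).
  { intros y v Hyv.
    apply (small_t _ _ (/2 * (hinner (hsub y xst) (hsub y xst) + hinner (hsub v ust) (hsub v ust)))).
    intros t Ht.
    assert (Hft : Hf N (hadd (hscal (1-t) xst) (hscal t y)) (hadd (hscal (1-t) ust) (hscal t v))
       ((1-t)*m + t*(hinner y v + /2 * hinner y y + /2 * hinner v v)
        - /2*t*(1-t)*(hinner (hsub y xst) (hsub y xst) + hinner (hsub v ust) (hsub v ust)))).
    { intros y' v' H'. assert (S1 := Hst y' v' H'). assert (Mo := mono _ _ _ _ Hyv H').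
      assert (A1 := Rmult_le_compat_l (1-t) _ _ ltac:(lra) S1).
      assert (A2 : t * 0 <= t * hinner (hsub y y') (hsub v v')) by (apply Rmult_le_compat_l; lra).
      hexpand. lra. }
    apply mlow in Hft. apply Rmult_le_reg_l with t; [lra|]. lra. }
  assert (L0 := Hf_L0 N maxi _ _ _ Hst).
  assert (Rel : forall y v, N y v -> hinner (hsub (hopp ust) y) (hsub (hopp xst) v) >= 0).
  { intros y v Hyv. assert (O := Opt y v Hyv). assert (P := hinner_pos _ (hadd xst ust)).
    hexpand. rewrite ?(hinner_sym _ xst y), ?(hinner_sym _ ust v), ?(hinner_sym _ ust xst) in *.
    lra. }
  assert (Nm := maxi _ _ Rel).
  assert (O := Opt _ _ Nm). assert (P := hinner_pos _ (hadd xst ust)).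
  assert (Z : hinner (hadd xst ust) (hadd xst ust) = 0).
  { hexpand. rewrite ?(hinner_sym _ ust xst) in *. lra. }
  apply hinner_def in Z.
  assert (E1 : hopp ust = hsub xst (hadd xst ust)) by (vext; ring).
  rewrite Z in E1. assert (E2 : hsub xst hzero = xst) by (vext; ring).
  rewrite E2 in E1. rewrite E1 in Nm. exists xst. exact Nm.
Qed.

Lemma sub0 {X : HilbertSpace} (a b : X) : hsub a b = hzero -> a = b.
Proof.
  intro H. assert (E : a = hadd (hsub a b) b) by (vext; ring).
  rewrite H in E. rewrite E. vext. ring.
Qed.

Lemma related_in {X : HilbertSpace} rho (M : setop X) : max_rho_monotone rho M ->
  forall a b, (forall y v, M y v -> hinner (hsub a y) (hsub b v) >= rho * hinner (hsub a y) (hsub a y)) ->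
  M a b.
Proof.
  intros [Hm Hmax] a b Hrel.
  apply (Hmax (fun x u => M x u \/ (x = a /\ u = b))).
  - intros x u y v [H1|[-> ->]] [H2|[-> ->]]; rewrite hnorm_sq.
    + rewrite <- hnorm_sq. apply Hm; auto.
    + specialize (Hrel _ _ H1). hexpand. lra.
    + apply Hrel; auto.
    + hexpand. lra.
  - intros; left; auto.
  - right; auto.
Qed.

Lemma resolvent_total {X : HilbertSpace} rho g (M : setop X) : max_rho_monotone rho M -> 0 < g ->
  0 < 1 + g * rho -> forall x, exists y u, M y u /\ x = hadd y (hscal g u).
Proof.
  intros HM Hg Hc x.
  set (f := fun y w => hadd (hscal (/g) (hadd (hscal (1 + g*rho) w) x)) (hscal rho y)).
  assert (Id : forall a y b w, hinner (hsub a y) (hsub (f a b) (f y w)) =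
     (/g * (1 + g*rho)) * hinner (hsub a y) (hsub b w) + rho * hinner (hsub a y) (hsub a y)).
  { intros. unfold f. hexpand. ring. }
  assert (Hp : 0 < /g * (1 + g*rho)) by (apply Rmult_lt_0_compat; auto; apply Rinv_0_lt_compat; auto).
  destruct (minty (fun y w => M y (f y w))) as [y Hy].
  - intros y1 w1 y2 w2 H1 H2. assert (Mo := proj1 HM _ _ _ _ H1 H2). rewrite hnorm_sq, Id in Mo.
    apply Rle_ge. apply Rmult_le_reg_l with (/g * (1 + g*rho)); auto. lra.
  - intros a b Hrel. apply (related_in rho M HM). intros y v Hyv.
    set (w := hscal (/(1 + g*rho)) (hsub (hscal g (hsub v (hscal rho y))) x)).
    assert (fw : f y w = v). { unfold f, w. vext. field. lra. }
    assert (Nyw : M y (f y w)) by (rewrite fw; auto).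
    specialize (Hrel y w Nyw). rewrite <- fw, Id.
    assert (0 <= /g * (1 + g*rho) * hinner (hsub a y) (hsub b w)) by (apply Rmult_le_pos; lra).
    lra.
  - exists y, (f y (hopp y)). split; auto. unfold f. vext. field. lra.
Qed.

Lemma resolvent_unique {X : HilbertSpace} rho g (M : setop X) : rho_monotone rho M -> 0 < g ->
  0 < 1 + g * rho -> forall x y1 y2, resolvent (op_scale g M) x y1 -> resolvent (op_scale g M) x y2 -> y1 = y2.
Proof.
  intros HM Hg Hc x y1 y2 [w1 [[u1 [H1 ->]] E1]] [w2 [[u2 [H2 ->]] E2]].
  assert (Mo := HM _ _ _ _ H1 H2). rewrite hnorm_sq in Mo.
  assert (U1 : u1 = hscal (/g) (hsub (hadd y1 (hscal g u1)) y1)) by (vext; field; lra).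
  assert (U2 : u2 = hscal (/g) (hsub (hadd y2 (hscal g u2)) y2)) by (vext; field; lra).
  rewrite <- E1 in U1. rewrite <- E2 in U2. rewrite U1, U2 in Mo.
  assert (Id : hinner (hsub y1 y2) (hsub (hscal (/ g) (hsub x y1)) (hscal (/ g) (hsub x y2))) =
     - / g * hinner (hsub y1 y2) (hsub y1 y2)) by (hexpand; ring).
  rewrite Id in Mo.
  assert (Hp : 0 < rho + /g).
  { replace (rho + /g) with (/g * (1 + g*rho)) by (field; lra).
    apply Rmult_lt_0_compat; auto. apply Rinv_0_lt_compat; auto. }
  assert (P := hinner_pos _ (hsub y1 y2)).
  assert (Z : hinner (hsub y1 y2) (hsub y1 y2) = 0) by nra.
  apply hinner_def in Z. apply sub0; auto.
Qed.

Lemma core_gen {X : HilbertSpace} (P U V Sv : X) sA sB g mu om al :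
  0 < g -> om < mu -> 0 < al ->
  hinner P U >= sA * hinner P P ->
  hinner (hsub (hsub P U) V) V >= sB * hinner (hsub (hsub P U) V) (hsub (hsub P U) V) ->
  hinner (hsub (hsub P V) (hscal (1-al) (hadd P U))) (hsub (hsub P V) (hscal (1-al) (hadd P U)))
   - al*al * hinner (hadd P U) (hadd P U) =
   - al * (2 * (hinner P U - sA * hinner P P)
          + 2 * (hinner (hsub (hsub P U) V) V - sB * hinner (hsub (hsub P U) V) (hsub (hsub P U) V))
          + 2 * g / (mu - om) * hinner Sv Sv) ->
  hinner (hsub (hsub P V) (hscal (1-al) (hadd P U))) (hsub (hsub P V) (hscal (1-al) (hadd P U)))
   <= al*al * hinner (hadd P U) (hadd P U).
Proof.
  intros Hg Hm Hal H1 H2 Id.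
  assert (HS := hinner_pos _ Sv).
  assert (0 <= 2 * g / (mu - om) * hinner Sv Sv).
  { apply Rmult_le_pos; auto. unfold Rdiv. apply Rmult_le_pos; [lra|]. left. apply Rinv_0_lt_compat. lra. }
  assert (0 <= al * (2 * (hinner P U - sA * hinner P P)
          + 2 * (hinner (hsub (hsub P U) V) V - sB * hinner (hsub (hsub P U) V) (hsub (hsub P U) V))
          + 2 * g / (mu - om) * hinner Sv Sv)) by (apply Rmult_le_pos; lra).
  lra.
Qed.

Lemma core_a {X : HilbertSpace} (P U V : X) g mu om :
  0 < g -> 0 <= om -> om < mu -> 2 * (g * mu * om) < mu - om ->
  hinner P U >= - (g * om) * hinner P P ->
  hinner (hsub (hsub P U) V) V >= g * mu * hinner (hsub (hsub P U) V) (hsub (hsub P U) V) ->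
  let al := (mu - om) / (2 * (mu - om - g * mu * om)) in
  hinner (hsub (hsub P V) (hscal (1-al) (hadd P U))) (hsub (hsub P V) (hscal (1-al) (hadd P U)))
   <= al*al * hinner (hadd P U) (hadd P U).
Proof.
  intros Hg Hom Hm Hs H1 H2 al.
  assert (Hal : 0 < al) by (unfold al; apply Rdiv_lt_0_compat; lra).
  apply (core_gen P U V (hsub (hscal (mu - om) P) (hscal mu (hadd U V))) (- (g*om)) (g*mu) g mu om al);
    auto.
  unfold al. hexpand.
  rewrite ?(hinner_sym _ U P), ?(hinner_sym _ V P), ?(hinner_sym _ V U).
  field. lra.
Qed.

Lemma core_b {X : HilbertSpace} (P U V : X) g mu om :
  0 < g -> 0 <= om -> om < mu -> 2 * (g * mu * om) < mu - om ->
  hinner P U >= g * mu * hinner P P ->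
  hinner (hsub (hsub P U) V) V >= - (g * om) * hinner (hsub (hsub P U) V) (hsub (hsub P U) V) ->
  let al := (mu - om) / (2 * (mu - om - g * mu * om)) in
  hinner (hsub (hsub P V) (hscal (1-al) (hadd P U))) (hsub (hsub P V) (hscal (1-al) (hadd P U)))
   <= al*al * hinner (hadd P U) (hadd P U).
Proof.
  intros Hg Hom Hm Hs H1 H2 al.
  assert (Hal : 0 < al) by (unfold al; apply Rdiv_lt_0_compat; lra).
  apply (core_gen P U V (hadd (hscal (mu - om) P) (hscal om (hadd U V))) (g*mu) (- (g*om)) g mu om al);
    auto.
  unfold al. hexpand.
  rewrite ?(hinner_sym _ U P), ?(hinner_sym _ V P), ?(hinner_sym _ V U).
  field. lra.
Qed.

Definition Zf {X : HilbertSpace} (al : R) (P U V : X) : X := hsub (hsub P V) (hscal (1-al) (hadd P U)).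

Lemma main_gen {X : HilbertSpace} (A B : setop X) rA rB g al :
  max_rho_monotone rA A -> max_rho_monotone rB B -> 0 < g -> 0 < 1 + g*rA -> 0 < 1 + g*rB ->
  (forall P U V : X, hinner P U >= g*rA * hinner P P ->
     hinner (hsub (hsub P U) V) V >= g*rB * hinner (hsub (hsub P U) V) (hsub (hsub P U) V) ->
     hinner (Zf al P U V) (Zf al P U V) <= al*al * hinner (hadd P U) (hadd P U)) ->
  0 < al < 1 ->
  (forall x : X, exists! w : X, DR_op g A B x w) /\ averaged al (DR_op g A B).
Proof.
  intros HA HB Hg HcA HcB core Hal.
  assert (tot1 := resolvent_total rA g A HA Hg HcA).
  assert (tot2 := resolvent_total rB g B HB Hg HcB).
  assert (Tex : forall x, exists w, DR_op g A B x w).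
  { intro x. destruct (tot1 x) as [p [a [Ha Ex]]].
    destruct (tot2 (hsub (hscal 2 p) x)) as [q [b [Hb Er]]].
    exists (hscal (1/2) (hadd x (hsub (hscal 2 q) (hsub (hscal 2 p) x)))).
    exists (hsub (hscal 2 q) (hsub (hscal 2 p) x)). split; auto.
    exists (hsub (hscal 2 p) x). split.
    - exists p. split; auto. exists (hscal g a). split; auto. exists a; auto.
    - exists q. split; auto. exists (hscal g b); split; auto. exists b; auto. }
  assert (Tun : forall x w1 w2, DR_op g A B x w1 -> DR_op g A B x w2 -> w1 = w2).
  { intros x w1 w2 [z1 [[r1 [[p1 [Hp1 ->]] [q1 [Hq1 ->]]]] ->]] [z2 [[r2 [[p2 [Hp2 ->]] [q2 [Hq2 ->]]]] ->]].
    assert (p1 = p2) by (apply (resolvent_unique rA g A (proj1 HA) Hg HcA x); auto). subst p2.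
    assert (q1 = q2) by (apply (resolvent_unique rB g B (proj1 HB) Hg HcB (hsub (hscal 2 p1) x)); auto).
    subst q2. reflexivity. }
  split.
  { intro x. destruct (Tex x) as [w Hw]. exists w. split; auto. intros w' Hw'. apply Tun with x; auto. }
  split; auto.
  set (Tf := fun x => proj1_sig (constructive_indefinite_description _ (Tex x))).
  assert (HT : forall x, DR_op g A B x (Tf x)).
  { intro x. unfold Tf. destruct (constructive_indefinite_description _ (Tex x)); auto. }
  exists (fun x => hscal (/al) (hsub (Tf x) (hscal (1-al) x))). split.
  - intros x1 x2.
    destruct (HT x1) as [z1 [[r1 [[p1 [[w1 [[a1 [Ha1 ->]] Ex1]] ->]] [q1 [[w1' [[b1 [Hb1 ->]] Er1]] ->]]]] E1]].
    destruct (HT x2) as [z2 [[r2 [[p2 [[w2 [[a2 [Ha2 ->]] Ex2]] ->]] [q2 [[w2' [[b2 [Hb2 ->]] Er2]] ->]]]] E2]].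
    rewrite E1, E2.
    assert (Q1 : q1 = hsub (hadd q1 (hscal g b1)) (hscal g b1)) by (vext; ring).
    rewrite <- Er1 in Q1.
    assert (Q2 : q2 = hsub (hadd q2 (hscal g b2)) (hscal g b2)) by (vext; ring).
    rewrite <- Er2 in Q2.
    subst q1 q2. subst x1 x2.
    assert (MoA := proj1 HA _ _ _ _ Ha1 Ha2). assert (MoB := proj1 HB _ _ _ _ Hb1 Hb2).
    rewrite hnorm_sq in MoA, MoB.
    assert (C := core (hsub p1 p2) (hscal g (hsub a1 a2)) (hscal g (hsub b1 b2))).
    match type of MoB with hinner ?Qd _ >= _ =>
      assert (EQ : hsub (hsub (hsub p1 p2) (hscal g (hsub a1 a2))) (hscal g (hsub b1 b2)) = Qd)
        by (vext; ring) end.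
    rewrite EQ, !hinner_scal_r in C.
    assert (G1 : g * hinner (hsub p1 p2) (hsub a1 a2) >= g * (rA * hinner (hsub p1 p2) (hsub p1 p2)))
      by (apply Rmult_ge_compat_l; lra).
    match type of MoB with hinner ?Qd ?Vd >= ?rr * ?Gd =>
      assert (G2 : g * hinner Qd Vd >= g * (rr * Gd)) by (apply Rmult_ge_compat_l; lra) end.
    assert (C' := C ltac:(lra) ltac:(lra)). clear C.
    match goal with |- hnorm ?L <= hnorm ?R =>
      assert (EL : L = hscal (/al) (Zf al (hsub p1 p2) (hscal g (hsub a1 a2)) (hscal g (hsub b1 b2))))
        by (unfold Zf; vext; field; lra);
      assert (ER : R = hadd (hsub p1 p2) (hscal g (hsub a1 a2))) by (vext; ring) end.
    rewrite EL, ER. unfold hnorm. apply sqrt_le_1_alt.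
    rewrite hinner_scal_l, hinner_scal_r.
    assert (Hi : 0 <= /al) by (left; apply Rinv_0_lt_compat; lra).
    apply Rle_trans with (/al * (/al * (al * al *
        hinner (hadd (hsub p1 p2) (hscal g (hsub a1 a2))) (hadd (hsub p1 p2) (hscal g (hsub a1 a2)))))).
    + apply Rmult_le_compat_l; auto. apply Rmult_le_compat_l; auto.
    + right. field. lra.
  - intros x w. split.
    + intro H. assert (w = Tf x) by (apply Tun with x; auto). subst w. vext. field. lra.
    + intro Hw. replace w with (Tf x); auto. rewrite Hw. vext. field. lra.
Qed.

Theorem mainTheorem12 (X : HilbertSpace) (A B : setop X) (mu omega gamma : R)
  (Hom : 0 <= omega) (Hmu : omega < mu)
  (Hg0 : 0 < gamma) (Hg1 : 0 < omega -> gamma < (mu - omega) / (2 * mu * omega))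
  (HAB : (max_rho_monotone (- omega) A /\ max_rho_monotone mu B) \/
         (max_rho_monotone mu A /\ max_rho_monotone (- omega) B)) :
  let T := DR_op gamma A B in
  let alpha := (mu - omega) / (2 * (mu - omega - gamma * mu * omega)) in
  (forall x : X, exists! w : X, T x w) /\
  0 < alpha < 1 /\
  averaged alpha T.
Proof.
  intros T alpha.
  assert (Hs : 2 * (gamma * mu * omega) < mu - omega).
  { destruct Hom as [Hp| <-].
    - specialize (Hg1 Hp).
      assert (Hq : 0 < 2 * mu * omega) by (apply Rmult_lt_0_compat; lra).
      assert (gamma * (2 * mu * omega) < (mu - omega) / (2 * mu * omega) * (2 * mu * omega))
        by (apply Rmult_lt_compat_r; auto).
      replace ((mu - omega) / (2 * mu * omega) * (2 * mu * omega)) with (mu - omega) in H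
        by (field; lra). lra.
    - lra. }
  assert (Hal : 0 < alpha < 1).
  { unfold alpha. split.
    - apply Rdiv_lt_0_compat; lra.
    - assert (E : (mu - omega) / (2 * (mu - omega - gamma * mu * omega)) * (2 * (mu - omega - gamma * mu * omega)) = mu - omega) by (field; lra).
      nra. }
  assert (Hgw : 0 < 1 + gamma * - omega).
  { assert (0 <= gamma * omega) by (apply Rmult_le_pos; lra).
    assert (gamma * omega * mu < mu) by nra. nra. }
  assert (Hgm : 0 < 1 + gamma * mu) by (assert (0 < gamma * mu) by (apply Rmult_lt_0_compat; lra); lra).
  destruct HAB as [[HA HB]|[HA HB]].
  - destruct (main_gen A B (-omega) mu gamma alpha HA HB Hg0 Hgw Hgm) as [H1 H2]; auto.
    intros P U V h1 h2. unfold Zf. apply (core_a P U V gamma mu omega); auto; lra.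
  - destruct (main_gen A B mu (-omega) gamma alpha HA HB Hg0 Hgm Hgw) as [H1 H2]; auto.
    intros P U V h1 h2. unfold Zf. apply (core_b P U V gamma mu omega); auto; lra.
Qed.
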